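(* Let $G_0$ and $A_0$ be bounded selfadjoint operators in $\mathcal H$ with $G_0A_0G_0\ge0$, and let $[x,y]:=(G_0x,y)$. Then the bounded $G_0$-symmetric operator $A_0G_0$ satisfies: (i) $\sigma(A_0G_0)\subset\mathbb R$; (ii) $(0,\infty)\cap\sigma(A_0G_0)\subset\sigma_{++}(A_0G_0)$; (iii) $(-\infty,0)\cap\sigma(A_0G_0)\subset\sigma_{--}(A_0G_0)$.
   Context: $(\mathcal H,(\cdot,\cdot))$ complex Hilbert space. $\sigma(S)$ is the spectrum; $\sigma_{ap}(S)$ is the set of $\lambda$ with a sequence $(x_n)$, $\|x_n\|=1$, $(S-\lambda)x_n\to0$. For an operator $T$ symmetric w.r.t. $[\cdot,\cdot]$, $\sigma_{++}(T)$ ($\sigma_{--}(T)$) is the set of $\lambda\in\sigma_{ap}(T)$ such that every $(x_n)\subset\operatorname{dom}T$ with $\|x_n\|=1$, $(T-\lambda)x_n\to0$ satisfies $\liminf_n[x_n,x_n]>0$ (resp. $\limsup_n[x_n,x_n]<0$). *)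

(* Defs.v *)
From Stdlib Require Import Reals Lra.
Open Scope R_scope.

Record Cplx : Type := mkC { Re : R ; Im : R }.
Definition RtoC (r : R) : Cplx := mkC r 0.
Definition C0 : Cplx := mkC 0 0.
Definition C1 : Cplx := mkC 1 0.
Definition Cadd (z w : Cplx) : Cplx := mkC (Re z + Re w) (Im z + Im w).
Definition Cmul (z w : Cplx) : Cplx :=
  mkC (Re z * Re w - Im z * Im w) (Re z * Im w + Im z * Re w).
Definition Cconj (z : Cplx) : Cplx := mkC (Re z) (- Im z).

Record HilbertSpace : Type := {
  carrier :> Type;
  vadd : carrier -> carrier -> carrier;
  vzero : carrier;
  vopp : carrier -> carrier;
  vscal : Cplx -> carrier -> carrier;
  inner : carrier -> carrier -> Cplx;
  vadd_assoc : forall x y z, vadd x (vadd y z) = vadd (vadd x y) z;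
  vadd_comm : forall x y, vadd x y = vadd y x;
  vadd_0 : forall x, vadd x vzero = x;
  vadd_opp : forall x, vadd x (vopp x) = vzero;
  vscal_1 : forall x, vscal C1 x = x;
  vscal_assoc : forall a b x, vscal a (vscal b x) = vscal (Cmul a b) x;
  vscal_distr_v : forall a x y, vscal a (vadd x y) = vadd (vscal a x) (vscal a y);
  vscal_distr_c : forall a b x, vscal (Cadd a b) x = vadd (vscal a x) (vscal b x);
  inner_add_l : forall x y z, inner (vadd x y) z = Cadd (inner x z) (inner y z);
  inner_scal_l : forall a x y, inner (vscal a x) y = Cmul a (inner x y);
  inner_conj : forall x y, inner y x = Cconj (inner x y);
  inner_pos : forall x, 0 <= Re (inner x x);
  inner_def : forall x, Re (inner x x) = 0 -> x = vzero;
  complete : forall u : nat -> carrier,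
    (forall eps, eps > 0 -> exists N : nat, forall m n : nat, (m >= N)%nat -> (n >= N)%nat ->
        sqrt (Re (inner (vadd (u m) (vopp (u n))) (vadd (u m) (vopp (u n))))) < eps) ->
    exists l : carrier, forall eps, eps > 0 -> exists N : nat, forall n : nat, (n >= N)%nat ->
        sqrt (Re (inner (vadd (u n) (vopp l)) (vadd (u n) (vopp l)))) < eps
}.

Arguments vadd {h}. Arguments vzero {h}. Arguments vopp {h}.
Arguments vscal {h}. Arguments inner {h}.

Section Ops.
Variable H : HilbertSpace.

Definition vsub (x y : H) : H := vadd x (vopp y).
Definition hnorm (x : H) : R := sqrt (Re (inner x x)).

Definition linear_op (T : H -> H) : Prop :=
  (forall x y, T (vadd x y) = vadd (T x) (T y)) /\
  (forall a x, T (vscal a x) = vscal a (T x)).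
Definition bounded_op (T : H -> H) : Prop :=
  linear_op T /\ exists M : R, forall x, hnorm (T x) <= M * hnorm x.
Definition selfadjoint (T : H -> H) : Prop :=
  bounded_op T /\ forall x y, inner (T x) y = inner x (T y).
Definition nonneg_op (T : H -> H) : Prop :=
  forall x, Im (inner (T x) x) = 0 /\ 0 <= Re (inner (T x) x).

Definition Gsymmetric (G T : H -> H) : Prop :=
  forall x y, inner (G (T x)) y = inner (G x) (T y).

Definition spectrum (S : H -> H) (lam : Cplx) : Prop :=
  ~ (exists B : H -> H, bounded_op B /\
       (forall x, B (vsub (S x) (vscal lam x)) = x) /\
       (forall x, vsub (S (B x)) (vscal lam (B x)) = x)).

Definition approx_seq (S : H -> H) (lam : Cplx) (x : nat -> H) : Prop :=
  (forall n, hnorm (x n) = 1) /\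
  Un_cv (fun n => hnorm (vsub (S (x n)) (vscal lam (x n)))) 0.
Definition sigma_ap (S : H -> H) (lam : Cplx) : Prop :=
  exists x, approx_seq S lam x.

(* sigma_{++} and sigma_{--} w.r.t. [x,y] = (G x, y);
   liminf_n [x_n,x_n] > 0  is unfolded as  exists eps>0, eventually [x_n,x_n] >= eps
   (and dually for limsup < 0). *)
Definition sigma_pp (G T : H -> H) (lam : Cplx) : Prop :=
  sigma_ap T lam /\
  forall x, approx_seq T lam x ->
    exists eps, eps > 0 /\ exists N : nat, forall n : nat, (n >= N)%nat ->
      Re (inner (G (x n)) (x n)) >= eps.
Definition sigma_mm (G T : H -> H) (lam : Cplx) : Prop :=
  sigma_ap T lam /\
  forall x, approx_seq T lam x ->
    exists eps, eps > 0 /\ exists N : nat, forall n : nat, (n >= N)%nat ->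
      Re (inner (G (x n)) (x n)) <= - eps.

End Ops.

(* Main.v *)
Require Import Defs.
From Stdlib Require Import Reals Lra Lia Psatz Classical IndefiniteDescription.
Open Scope R_scope.

Arguments vadd_assoc {h}. Arguments vadd_comm {h}. Arguments vadd_0 {h}. Arguments vadd_opp {h}.
Arguments vscal_1 {h}. Arguments vscal_assoc {h}. Arguments vscal_distr_v {h}. Arguments vscal_distr_c {h}.
Arguments inner_add_l {h}. Arguments inner_scal_l {h}. Arguments inner_conj {h}. Arguments inner_pos {h}.
Arguments inner_def {h}. Arguments complete {h}.
Arguments vsub {H}. Arguments hnorm {H}.

Ltac fld := field; repeat split; try (apply Rgt_not_eq); try lra; try nra.

Lemma Ceq : forall z w : Cplx, Re z = Re w -> Im z = Im w -> z = w.
Proof. intros [a b] [c d]; simpl; intros; subst; reflexivity. Qed.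

Section Vec.
Variable H : HilbertSpace.

Lemma vadd_0l : forall x : H, vadd vzero x = x.
Proof. intros; rewrite vadd_comm; apply vadd_0. Qed.

Lemma vadd_opp_l : forall x : H, vadd (vopp x) x = vzero.
Proof. intros; rewrite vadd_comm; apply vadd_opp. Qed.

Lemma vadd_cancel_r : forall u v w : H, vadd u w = vadd v w -> u = v.
Proof.
  intros u v w E.
  assert (E2 : vadd (vadd u w) (vopp w) = vadd (vadd v w) (vopp w)) by (rewrite E; reflexivity).
  rewrite <- !vadd_assoc, vadd_opp, !vadd_0 in E2. exact E2.
Qed.

Lemma vadd_cancel_l : forall u v w : H, vadd w u = vadd w v -> u = v.
Proof. intros u v w E. apply (vadd_cancel_r u v w). rewrite (vadd_comm u), (vadd_comm v); exact E. Qed.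

Lemma idem_zero : forall u : H, vadd u u = u -> u = vzero.
Proof. intros u E. apply (vadd_cancel_r u vzero u). rewrite vadd_0l; exact E. Qed.

Lemma opp_unique : forall a b : H, vadd a b = vzero -> b = vopp a.
Proof. intros a b E. apply (vadd_cancel_l b (vopp a) a). rewrite vadd_opp; exact E. Qed.

Lemma vadd_swap : forall a b c d : H, vadd (vadd a b) (vadd c d) = vadd (vadd a c) (vadd b d).
Proof.
  intros. rewrite <- !vadd_assoc. f_equal. rewrite !vadd_assoc. f_equal. apply vadd_comm.
Qed.

Lemma vopp_add : forall a b : H, vopp (vadd a b) = vadd (vopp a) (vopp b).
Proof.
  intros. symmetry. apply opp_unique. rewrite vadd_swap, !vadd_opp, vadd_0. reflexivity.
Qed.

Lemma vopp_opp : forall a : H, vopp (vopp a) = a.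
Proof. intros. symmetry. apply opp_unique. apply vadd_opp_l. Qed.

Lemma vsub_add : forall a b : H, vadd (vsub a b) b = a.
Proof. intros. unfold vsub. rewrite <- vadd_assoc, vadd_opp_l, vadd_0. reflexivity. Qed.

Lemma vsub_eq0 : forall a b : H, vsub a b = vzero -> a = b.
Proof. intros a b E. rewrite <- (vsub_add a b), E, vadd_0l. reflexivity. Qed.

Lemma vsub_vv : forall a : H, vsub a a = vzero.
Proof. intros; apply vadd_opp. Qed.

Lemma vscal_zero : forall (a : Cplx) (x : H), Re a = 0 -> Im a = 0 -> vscal a x = vzero.
Proof.
  intros a x h1 h2. apply idem_zero. rewrite <- vscal_distr_c. f_equal. apply Ceq; simpl; lra.
Qed.

Lemma vopp_zero : vopp (@vzero H) = vzero.
Proof. symmetry; apply opp_unique; apply vadd_0. Qed.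

Lemma vsub_addr : forall a b c d : H, vsub (vadd a b) (vadd c d) = vadd (vsub a c) (vsub b d).
Proof. intros. unfold vsub. rewrite vopp_add. apply vadd_swap. Qed.

Lemma vsub_sym_opp : forall a b : H, vsub b a = vopp (vsub a b).
Proof.
  intros. apply opp_unique. unfold vsub. rewrite (vadd_comm b), vadd_swap, vadd_opp, vadd_opp_l, vadd_0. reflexivity.
Qed.

Lemma vsub_chain : forall a b c : H, vsub a c = vadd (vsub a b) (vsub b c).
Proof.
  intros. unfold vsub. rewrite vadd_assoc. f_equal. rewrite <- vadd_assoc, vadd_opp_l, vadd_0. reflexivity.
Qed.

Lemma vsub_addc : forall p q c : H, vsub (vadd p c) (vadd q c) = vsub p q.
Proof. intros. rewrite vsub_addr, vsub_vv, vadd_0. reflexivity. Qed.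

Lemma lin_zero : forall L : H -> H, linear_op H L -> L vzero = vzero.
Proof. intros L [h1 h2]. apply idem_zero. rewrite <- h1, vadd_0. reflexivity. Qed.

Lemma lin_opp : forall L : H -> H, linear_op H L -> forall x, L (vopp x) = vopp (L x).
Proof.
  intros L hL x. apply opp_unique. destruct hL as [h1 h2] eqn:E. rewrite <- h1, vadd_opp.
  apply lin_zero; auto.
Qed.

Lemma lin_sub : forall L : H -> H, linear_op H L -> forall x y, L (vsub x y) = vsub (L x) (L y).
Proof. intros L hL x y. unfold vsub. destruct hL as [h1 h2] eqn:E. rewrite h1, lin_opp; auto. Qed.

Lemma lin_vscal : forall a, linear_op H (vscal a).
Proof.
  intros a. split.
  - intros; apply vscal_distr_v.
  - intros b x. rewrite !vscal_assoc. f_equal. apply Ceq; simpl; ring.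
Qed.

Lemma lin_id : linear_op H (fun x => x).
Proof. split; reflexivity. Qed.

Lemma lin_comp : forall L1 L2 : H -> H, linear_op H L1 -> linear_op H L2 -> linear_op H (fun x => L1 (L2 x)).
Proof.
  intros L1 L2 [a1 b1] [a2 b2]. split; intros.
  - rewrite a2, a1; reflexivity.
  - rewrite b2, b1; reflexivity.
Qed.

Lemma lin_add : forall L1 L2 : H -> H, linear_op H L1 -> linear_op H L2 -> linear_op H (fun x => vadd (L1 x) (L2 x)).
Proof.
  intros L1 L2 [a1 b1] [a2 b2]. split; intros.
  - rewrite a1, a2. apply vadd_swap.
  - rewrite b1, b2, vscal_distr_v. reflexivity.
Qed.

Lemma lin_neg : forall L : H -> H, linear_op H L -> linear_op H (fun x => vopp (L x)).
Proof.
  intros L hL. pose proof hL as [a1 b1]. split; intros.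
  - rewrite a1, vopp_add; reflexivity.
  - rewrite b1. symmetry. apply lin_opp. apply lin_vscal.
Qed.

Lemma lin_subf : forall L1 L2 : H -> H, linear_op H L1 -> linear_op H L2 -> linear_op H (fun x => vsub (L1 x) (L2 x)).
Proof. intros. unfold vsub. apply (lin_add L1 (fun x => vopp (L2 x))); auto. apply lin_neg; auto. Qed.


Lemma inner_add_r : forall x y z : H, inner x (vadd y z) = Cadd (inner x y) (inner x z).
Proof.
  intros. rewrite (inner_conj (vadd y z) x), inner_add_l, (inner_conj y x), (inner_conj z x).
  apply Ceq; simpl; ring.
Qed.

Lemma inner_scal_r : forall a (x y : H), inner x (vscal a y) = Cmul (Cconj a) (inner x y).
Proof.
  intros. rewrite (inner_conj (vscal a y) x), inner_scal_l, (inner_conj y x).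
  apply Ceq; simpl; ring.
Qed.

Lemma inner_zero_l : forall y : H, inner vzero y = C0.
Proof.
  intros y. pose proof (inner_add_l (@vzero H) vzero y) as E. rewrite vadd_0 in E.
  destruct (inner vzero y) as [u v]. unfold Cadd in E; simpl in E. injection E; intros.
  apply Ceq; simpl; lra.
Qed.

Lemma inner_zero_r : forall y : H, inner y vzero = C0.
Proof. intros. rewrite inner_conj, inner_zero_l. apply Ceq; simpl; lra. Qed.

Lemma Re_inner_opp_l : forall x y : H, Re (inner (vopp x) y) = - Re (inner x y).
Proof.
  intros. pose proof (inner_add_l x (vopp x) y) as E. rewrite vadd_opp, inner_zero_l in E.
  apply (f_equal Re) in E. simpl in E. lra.
Qed.
Lemma Im_inner_opp_l : forall x y : H, Im (inner (vopp x) y) = - Im (inner x y).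
Proof.
  intros. pose proof (inner_add_l x (vopp x) y) as E. rewrite vadd_opp, inner_zero_l in E.
  apply (f_equal Im) in E. simpl in E. lra.
Qed.
Lemma Re_inner_opp_r : forall x y : H, Re (inner x (vopp y)) = - Re (inner x y).
Proof. intros. rewrite (inner_conj (vopp y) x), (inner_conj y x). simpl. apply Re_inner_opp_l. Qed.
Lemma Im_inner_opp_r : forall x y : H, Im (inner x (vopp y)) = - Im (inner x y).
Proof. intros. rewrite (inner_conj (vopp y) x), (inner_conj y x). simpl. rewrite Im_inner_opp_l. ring. Qed.

Lemma Re_inner_sym : forall x y : H, Re (inner y x) = Re (inner x y).
Proof. intros. rewrite inner_conj. reflexivity. Qed.
Lemma Im_inner_sym : forall x y : H, Im (inner y x) = - Im (inner x y).
Proof. intros. rewrite inner_conj. reflexivity. Qed.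
Lemma Im_inner_self : forall x : H, Im (inner x x) = 0.
Proof. intros. pose proof (Im_inner_sym x x). lra. Qed.

Definition nsq (x : H) := Re (inner x x).

Lemma nsq_pos : forall x, 0 <= nsq x.
Proof. intros; apply inner_pos. Qed.

Lemma nsq_add : forall x y : H, nsq (vadd x y) = nsq x + nsq y + 2 * Re (inner x y).
Proof.
  intros. unfold nsq. rewrite inner_add_l, !inner_add_r. simpl.
  rewrite (Re_inner_sym x y). ring.
Qed.

Lemma re_expand : forall (s : R) (u v u' v' : H),
  Re (inner (vadd u (vscal (RtoC s) v)) (vadd u' (vscal (RtoC s) v'))) =
  Re (inner u u') + s * Re (inner u v') + s * Re (inner v u') + s * s * Re (inner v v').
Proof.
  intros. repeat (rewrite inner_add_l || rewrite inner_add_r || rewrite inner_scal_l || rewrite inner_scal_r).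
  simpl. ring.
Qed.

Lemma nsq_scal : forall a (x : H), nsq (vscal a x) = (Re a * Re a + Im a * Im a) * nsq x.
Proof.
  intros. unfold nsq. rewrite inner_scal_l, inner_scal_r. simpl. rewrite Im_inner_self. ring.
Qed.

Lemma nsq_opp : forall x : H, nsq (vopp x) = nsq x.
Proof.
  intros. unfold nsq. rewrite Re_inner_opp_l, Re_inner_opp_r. ring.
Qed.

Lemma nsq_zero : forall x : H, nsq x = 0 -> x = vzero.
Proof. intros; apply inner_def; auto. Qed.

Lemma CS_sq : forall x y : H, Re (inner x y) * Re (inner x y) <= nsq x * nsq y.
Proof.
  intros x y. destruct (Req_dec (nsq y) 0) as [h0|h0].
  - rewrite h0. apply nsq_zero in h0. subst y. rewrite inner_zero_r. simpl. pose proof (nsq_pos x). lra.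
  - pose proof (nsq_pos y) as hp. assert (hy : 0 < nsq y) by lra.
    set (t := - Re (inner x y) / nsq y).
    pose proof (nsq_pos (vadd x (vscal (RtoC t) y))) as P. unfold nsq in P.
    rewrite re_expand in P. change (Re (inner x x)) with (nsq x) in P. change (Re (inner y y)) with (nsq y) in P. rewrite (Re_inner_sym x y) in P.
    set (r := Re (inner x y)) in *.
    assert (E : t * nsq y = - r) by (unfold t; field; apply Rgt_not_eq; exact hy).
    assert (Q : 0 <= (nsq x + t * r + t * r + t * t * nsq y) * nsq y) by (apply Rmult_le_pos; lra).
    replace ((nsq x + t * r + t * r + t * t * nsq y) * nsq y) with
      (nsq x * nsq y + 2 * r * (t * nsq y) + (t * nsq y) * (t * nsq y)) in Q by ring.
    rewrite E in Q. lra.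
Qed.

Lemma hn_nsq : forall x : H, hnorm x = sqrt (nsq x).
Proof. reflexivity. Qed.
Lemma hn_pos : forall x : H, 0 <= hnorm x.
Proof. intros; apply sqrt_pos. Qed.
Lemma hn_sq : forall x : H, hnorm x * hnorm x = nsq x.
Proof. intros; unfold hnorm; apply sqrt_sqrt; apply nsq_pos. Qed.
Lemma le_from_sq : forall (x : H) b, 0 <= b -> nsq x <= b * b -> hnorm x <= b.
Proof. intros. pose proof (hn_sq x). pose proof (hn_pos x). nra. Qed.
Lemma hn_zero : forall x : H, hnorm x = 0 -> x = vzero.
Proof. intros. apply nsq_zero. rewrite <- hn_sq, H0. ring. Qed.
Lemma hn_vzero : hnorm (@vzero H) = 0.
Proof. unfold hnorm. rewrite inner_zero_l. simpl. apply sqrt_0. Qed.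

Lemma CS_re : forall x y : H, Rabs (Re (inner x y)) <= hnorm x * hnorm y.
Proof.
  intros. pose proof (CS_sq x y). rewrite <- !hn_sq in H0.
  pose proof (hn_pos x); pose proof (hn_pos y).
  apply Rsqr_le_abs_0 in H0 || idtac.
  assert (0 <= hnorm x * hnorm y) by nra.
  apply Rabs_le. split; nra.
Qed.

Lemma CS_im : forall x y : H, Rabs (Im (inner x y)) <= hnorm x * hnorm y.
Proof.
  intros. pose proof (CS_re x (vscal (mkC 0 1) y)) as E.
  rewrite inner_scal_r in E. simpl in E.
  replace (0 * Re (inner x y) - - (1) * Im (inner x y)) with (Im (inner x y)) in E by ring.
  unfold hnorm at 2 in E. rewrite nsq_scal in E || (fold (nsq (vscal (mkC 0 1) y)) in E; rewrite nsq_scal in E).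
  simpl in E. replace ((0 * 0 + 1 * 1) * nsq y) with (nsq y) in E by ring. exact E.
Qed.

Lemma hn_tri : forall x y : H, hnorm (vadd x y) <= hnorm x + hnorm y.
Proof.
  intros. apply le_from_sq. pose proof (hn_pos x); pose proof (hn_pos y); lra.
  rewrite nsq_add, <- !hn_sq. pose proof (CS_re x y). apply Rabs_le_between in H0 || idtac.
  pose proof (Rle_abs (Re (inner x y))). nra.
Qed.

Definition Cabs (a : Cplx) := sqrt (Re a * Re a + Im a * Im a).

Lemma hn_scal : forall a (x : H), hnorm (vscal a x) = Cabs a * hnorm x.
Proof.
  intros. unfold hnorm, Cabs. fold (nsq (vscal a x)). rewrite nsq_scal. apply sqrt_mult.
  nra. apply nsq_pos.
Qed.

Lemma hn_opp : forall x : H, hnorm (vopp x) = hnorm x.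
Proof. intros. unfold hnorm. fold (nsq (vopp x)). rewrite nsq_opp. reflexivity. Qed.

Lemma hn_sub_sym : forall a b : H, hnorm (vsub a b) = hnorm (vsub b a).
Proof. intros. rewrite (vsub_sym_opp a b), hn_opp. reflexivity. Qed.

Lemma hn_tri_sub : forall a b c : H, hnorm (vsub a c) <= hnorm (vsub a b) + hnorm (vsub b c).
Proof. intros. rewrite (vsub_chain a b c). apply hn_tri. Qed.

Lemma hn_tri2 : forall a b : H, hnorm a <= hnorm (vsub a b) + hnorm b.
Proof. intros. rewrite <- (vsub_add a b) at 1. apply hn_tri. Qed.

Lemma hn_sub_le : forall a b : H, hnorm (vsub a b) <= hnorm a + hnorm b.
Proof. intros. unfold vsub. rewrite <- (hn_opp b). apply hn_tri. Qed.

Lemma Cabs_pos : forall a, 0 <= Cabs a.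
Proof. intros; apply sqrt_pos. Qed.
Lemma Cabs_sq : forall a, Cabs a * Cabs a = Re a * Re a + Im a * Im a.
Proof. intros; unfold Cabs; apply sqrt_sqrt; nra. Qed.
Lemma Cabs_RtoC : forall r, Cabs (RtoC r) = Rabs r.
Proof. intros. unfold Cabs, RtoC; simpl. rewrite <- sqrt_Rsqr_abs. unfold Rsqr. f_equal. ring. Qed.
Lemma Cabs_conj : forall a, Cabs (Cconj a) = Cabs a.
Proof. intros. unfold Cabs; simpl. f_equal. ring. Qed.


Lemma vopp_scal : forall a (x : H), vopp (vscal a x) = vscal (mkC (- Re a) (- Im a)) x.
Proof.
  intros. symmetry. apply opp_unique. rewrite <- vscal_distr_c. apply vscal_zero; simpl; lra.
Qed.

Lemma bnd_pos : forall L : H -> H, bounded_op H L ->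
  exists M, 0 < M /\ forall x, hnorm (L x) <= M * hnorm x.
Proof.
  intros L [_ [M hM]]. exists (Rmax M 1). split.
  - pose proof (Rmax_r M 1). lra.
  - intros x. eapply Rle_trans; [apply hM|]. apply Rmult_le_compat_r; [apply hn_pos | apply Rmax_l].
Qed.

Section Inv.
Variables (Sop Sd : H -> H).
Hypothesis hS : linear_op H Sop.
Hypothesis hSd : linear_op H Sd.
Variable K : R.
Hypothesis hK : 0 < K.
Hypothesis hMb : forall u, hnorm (Sop (Sd u)) <= K * hnorm u.
Hypothesis hadj : forall x y, inner (Sop x) y = inner x (Sd y).
Variables k k' : R.
Hypothesis hk : 0 < k.
Hypothesis hk' : 0 < k'.
Hypothesis hSb : forall x, k * hnorm x <= hnorm (Sop x).
Hypothesis hSdb : forall y, k' * hnorm y <= hnorm (Sd y).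

Let Mo u := Sop (Sd u).
Let m := k' * k'.
Let beta := m / (K * K).
Let Lo u := vadd u (vscal (RtoC (- beta)) (Mo u)).

Lemma beta_pos : 0 < beta.
Proof. unfold beta, m. apply Rdiv_lt_0_compat; nra. Qed.

Lemma L_lin : linear_op H Lo.
Proof.
  unfold Lo. apply (lin_add (fun u => u) (fun u => vscal (RtoC (- beta)) (Mo u))).
  apply lin_id. apply (lin_comp (vscal _) Mo). apply lin_vscal. unfold Mo. apply lin_comp; auto.
Qed.

Lemma L_contr : forall u, nsq (Lo u) <= (1 - m * m / (K * K)) * nsq u.
Proof.
  intros u. unfold nsq, Lo. rewrite re_expand.
  assert (R1: Re (inner (Mo u) u) = nsq (Sd u)) by (unfold Mo, nsq; rewrite hadj; reflexivity).
  assert (R2: Re (inner u (Mo u)) = nsq (Sd u)) by (rewrite Re_inner_sym; exact R1).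
  rewrite R1, R2.
  change (Re (inner (Mo u) (Mo u))) with (nsq (Mo u)).
  change (Re (inner u u)) with (nsq u).
  assert (A1 : m * nsq u <= nsq (Sd u)).
  { pose proof (hSdb u). pose proof (hn_pos u). rewrite <- !hn_sq. unfold m.
    replace (k' * k' * (hnorm u * hnorm u)) with ((k' * hnorm u) * (k' * hnorm u)) by ring.
    apply Rmult_le_compat; nra. }
  assert (A2 : nsq (Mo u) <= K * K * nsq u).
  { pose proof (hMb u). pose proof (hn_pos u). pose proof (hn_pos (Mo u)). rewrite <- !hn_sq.
    replace (K * K * (hnorm u * hnorm u)) with ((K * hnorm u) * (K * hnorm u)) by ring.
    apply Rmult_le_compat; unfold Mo in *; nra. }
  pose proof beta_pos as bp.
  assert (B1 : beta * (m * nsq u) <= beta * nsq (Sd u)) by (apply Rmult_le_compat_l; lra).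
  assert (B2 : beta * beta * nsq (Mo u) <= beta * beta * (K * K * nsq u)) by (apply Rmult_le_compat_l; nra).
  assert (E : beta * beta * (K * K * nsq u) = beta * (m * nsq u)).
  { unfold beta. fld. }
  assert (E2 : (1 - m * m / (K * K)) * nsq u = nsq u - beta * (m * nsq u)).
  { unfold beta. fld. }
  rewrite E2. nra.
Qed.

Let q := Rmax (1 - m * m / (K * K)) (1/2).
Let th := sqrt q.

Lemma q_lt1 : q < 1.
Proof.
  unfold q. apply Rmax_lub_lt; [|lra].
  assert (0 < m * m / (K * K)). { unfold m. apply Rdiv_lt_0_compat; repeat apply Rmult_lt_0_compat; lra. } lra.
Qed.
Lemma q_pos : 1/2 <= q.
Proof. apply Rmax_r. Qed.

Lemma th_bounds : 0 < th /\ th < 1.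
Proof.
  pose proof q_lt1; pose proof q_pos. unfold th. split.
  - apply sqrt_lt_R0. lra.
  - rewrite <- sqrt_1. apply sqrt_lt_1; lra.
Qed.

Lemma L_contr_n : forall u, hnorm (Lo u) <= th * hnorm u.
Proof.
  intros u. apply le_from_sq. pose proof th_bounds as [? ?]; pose proof (hn_pos u); nra.
  replace (th * hnorm u * (th * hnorm u)) with ((th * th) * (hnorm u * hnorm u)) by ring.
  unfold th. rewrite sqrt_sqrt by (pose proof q_pos; lra). rewrite hn_sq.
  eapply Rle_trans; [apply L_contr|]. apply Rmult_le_compat_r; [apply nsq_pos| apply Rmax_l].
Qed.

Section Fix.
Variable z : H.
Let F v := vadd (Lo v) (vscal (RtoC beta) z).
Fixpoint vs (n : nat) : H := match n with O => vzero | S n' => F (vs n') end.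

Lemma F_diff : forall u w, vsub (F u) (F w) = Lo (vsub u w).
Proof. intros. unfold F. rewrite vsub_addc. symmetry. apply lin_sub. apply L_lin. Qed.

Let C := hnorm (vsub (vs 1) (vs 0)).

Lemma vs_step : forall n, hnorm (vsub (vs (S n)) (vs n)) <= th ^ n * C.
Proof.
  induction n.
  - simpl. unfold C. simpl. lra.
  - change (hnorm (vsub (F (vs (S n))) (F (vs n))) <= th ^ S n * C).
    rewrite F_diff. eapply Rle_trans; [apply L_contr_n|].
    replace (th ^ S n * C) with (th * (th ^ n * C)) by (simpl; ring).
    pose proof th_bounds as [? ?]. apply Rmult_le_compat_l; lra.
Qed.

Lemma vs_cauchy_aux : forall n j, (1 - th) * hnorm (vsub (vs (n + j)) (vs n)) <= C * th ^ n * (1 - th ^ j).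
Proof.
  intros n j. induction j.
  - rewrite Nat.add_0_r, vsub_vv, hn_vzero. simpl. lra.
  - pose proof th_bounds as [t0 t1].
    pose proof (hn_tri_sub (vs (n + S j)) (vs (n + j)) (vs n)) as T.
    replace (n + S j)%nat with (S (n + j)) in * by lia.
    pose proof (vs_step (n + j)) as St. rewrite pow_add in St.
    assert (T2 : (1 - th) * hnorm (vsub (vs (S (n + j))) (vs n)) <=
                 (1 - th) * (th ^ n * th ^ j * C) + (1 - th) * hnorm (vsub (vs (n + j)) (vs n))).
    { rewrite <- Rmult_plus_distr_l. apply Rmult_le_compat_l; lra. }
    rewrite <- tech_pow_Rmult.
    assert (Eq : (1 - th) * (th ^ n * th ^ j * C) + C * th ^ n * (1 - th ^ j) = C * th ^ n * (1 - th * th ^ j)) by ring.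
    lra.
Qed.

Lemma C_pos : 0 <= C.
Proof. apply hn_pos. Qed.

Lemma vs_cauchy : forall n m0, (n <= m0)%nat -> hnorm (vsub (vs m0) (vs n)) <= C * th ^ n / (1 - th).
Proof.
  intros n m0 hnm. pose proof th_bounds as [t0 t1].
  replace m0 with (n + (m0 - n))%nat by lia.
  pose proof (vs_cauchy_aux n (m0 - n)) as A.
  assert (0 <= th ^ (m0 - n)) by (apply pow_le; lra).
  assert (0 <= th ^ n) by (apply pow_le; lra).
  pose proof C_pos.
  apply Rmult_le_reg_l with (1 - th); [lra|].
  replace ((1 - th) * (C * th ^ n / (1 - th))) with (C * th ^ n) by (fld).
  assert (0 <= C * th^n * th^(m0-n)) by (repeat apply Rmult_le_pos; lra).
  assert (C*th^n*(1 - th^(m0-n)) = C*th^n - C*th^n*th^(m0-n)) by ring. lra.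
Qed.

Lemma vs_conv : exists l, forall eps, eps > 0 -> exists N : nat, forall n : nat, (n >= N)%nat ->
        hnorm (vsub (vs n) l) < eps.
Proof.
  apply (complete (vs)). intros eps heps.
  pose proof th_bounds as [t0 t1]. pose proof C_pos.
  destruct (pow_lt_1_zero th ltac:(rewrite Rabs_pos_eq; lra) (eps * (1 - th) / (C + 1)))
    as [N hN].
  { apply Rdiv_lt_0_compat; nra. }
  exists N. intros m0 n hm hn.
  change (hnorm (vsub (vs m0) (vs n)) < eps).
  assert (key : forall a b, (a >= N)%nat -> (a <= b)%nat -> hnorm (vsub (vs b) (vs a)) < eps).
  { intros a b ha hab. eapply Rle_lt_trans; [apply vs_cauchy; exact hab|].
    specialize (hN a ha). rewrite Rabs_pos_eq in hN by (apply pow_le; lra).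
    apply Rmult_lt_reg_l with (1 - th); [lra|].
    replace ((1 - th) * (C * th ^ a / (1 - th))) with (C * th ^ a) by (fld).
    assert (0 <= th ^ a) by (apply pow_le; lra).
    apply Rmult_lt_compat_l with (r := C + 1) in hN; [|lra].
    replace ((C + 1) * (eps * (1 - th) / (C + 1))) with (eps * (1 - th)) in hN by (fld).
    nra. }
  destruct (Nat.le_ge_cases n m0).
  - apply key; auto.
  - rewrite hn_sub_sym. apply key; auto.
Qed.

Lemma fix_exists : exists l, F l = l.
Proof.
  destruct vs_conv as [l hl]. exists l.
  apply vsub_eq0. apply hn_zero.
  pose proof th_bounds as [t0 t1].
  assert (B : forall eps, eps > 0 -> hnorm (vsub (F l) l) <= 2 * eps).
  { intros eps he. destruct (hl eps he) as [N hN].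
    pose proof (hn_tri_sub (F l) (F (vs N)) l) as T.
    rewrite F_diff in T. pose proof (L_contr_n (vsub l (vs N))) as T2.
    change (F (vs N)) with (vs (S N)) in T.
    pose proof (hN N (le_n N)). pose proof (hN (S N) ltac:(lia)).
    rewrite hn_sub_sym in H0. pose proof (hn_pos (vsub l (vs N))). nra. }
  pose proof (hn_pos (vsub (F l) l)).
  destruct (Req_dec (hnorm (vsub (F l) l)) 0); auto.
  specialize (B (hnorm (vsub (F l) l) / 4) ltac:(lra)). lra.
Qed.

Lemma solve_M : exists l, Mo l = z.
Proof.
  destruct fix_exists as [l hl]. exists l.
  unfold F, Lo in hl. rewrite <- vadd_assoc in hl.
  pose proof (vadd_cancel_l _ vzero l (eq_trans hl (eq_sym (vadd_0 l)))) as hl2. clear hl. rename hl2 into hl.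
  apply opp_unique in hl. rewrite vopp_scal in hl.
  pose proof beta_pos.
  assert (E1 : forall a (x : H), Re a = 1 -> Im a = 0 -> vscal a x = x).
  { intros [r i] x h1 h2. simpl in h1, h2. subst. exact (vscal_1 x). }
  transitivity (vscal (RtoC (1 / beta)) (vscal (RtoC beta) z)).
  - rewrite hl, vscal_assoc. symmetry. apply E1; simpl; fld.
  - rewrite vscal_assoc. apply E1; simpl; fld.
Qed.

End Fix.

Lemma S_surj : forall z, exists x, Sop x = z.
Proof. intros z. destruct (solve_M z) as [l hl]. exists (Sd l). exact hl. Qed.

Lemma S_inj : forall u w, Sop u = Sop w -> u = w.
Proof.
  intros u w E. apply vsub_eq0. apply hn_zero.
  pose proof (hSb (vsub u w)). rewrite lin_sub, E, vsub_vv, hn_vzero in H0 by auto.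
  pose proof (hn_pos (vsub u w)). nra.
Qed.

Lemma S_invertible : exists B : H -> H, bounded_op H B /\
   (forall x, B (Sop x) = x) /\ (forall x, Sop (B x) = x).
Proof.
  set (B := fun z => proj1_sig (constructive_indefinite_description _ (S_surj z))).
  assert (hB : forall z, Sop (B z) = z) by (intros; unfold B; apply proj2_sig).
  exists B. split; [|split].
  - split; [split|].
    + intros x y. apply S_inj. rewrite hB. destruct hS as [h1 h2]. rewrite h1, !hB. reflexivity.
    + intros a x. apply S_inj. rewrite hB. destruct hS as [h1 h2]. rewrite h2, !hB. reflexivity.
    + exists (1 / k). intros x. pose proof (hSb (B x)). rewrite hB in H0.
      apply Rmult_le_reg_l with k; auto. replace (k * (1 / k * hnorm x)) with (hnorm x) by (fld). exact H0.
  - intros x. apply S_inj. apply hB.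
  - exact hB.
Qed.

End Inv.


Lemma inner_sub_l_re : forall u w y : H, Re (inner (vsub u w) y) = Re (inner u y) - Re (inner w y).
Proof. intros. unfold vsub. rewrite inner_add_l. simpl. rewrite Re_inner_opp_l. ring. Qed.
Lemma inner_sub_l_im : forall u w y : H, Im (inner (vsub u w) y) = Im (inner u y) - Im (inner w y).
Proof. intros. unfold vsub. rewrite inner_add_l. simpl. rewrite Im_inner_opp_l. ring. Qed.
Lemma inner_sub_r_re : forall u w y : H, Re (inner y (vsub u w)) = Re (inner y u) - Re (inner y w).
Proof. intros. unfold vsub. rewrite inner_add_r. simpl. rewrite Re_inner_opp_r. ring. Qed.
Lemma inner_sub_r_im : forall u w y : H, Im (inner y (vsub u w)) = Im (inner y u) - Im (inner y w).
Proof. intros. unfold vsub. rewrite inner_add_r. simpl. rewrite Im_inner_opp_r. ring. Qed.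

Section Ops.
Variables G A : H -> H.
Hypothesis hG : selfadjoint H G.
Hypothesis hA : selfadjoint H A.
Hypothesis hpos : nonneg_op H (fun x => G (A (G x))).
Variables c a : R.
Hypothesis hc : 0 < c.
Hypothesis ha : 0 < a.
Hypothesis hcb : forall x, hnorm (G x) <= c * hnorm x.
Hypothesis hab : forall x, hnorm (A x) <= a * hnorm x.

Definition Top x := A (G x).
Definition Pop x := G (A (G x)).
Definition Sl lam x := vsub (Top x) (vscal lam x).
Definition Sdl lam y := vsub (G (A y)) (vscal (Cconj lam) y).

Lemma G_lin : linear_op H G. Proof. destruct hG as [[h _] _]; exact h. Qed.
Lemma A_lin : linear_op H A. Proof. destruct hA as [[h _] _]; exact h. Qed.
Lemma G_sa : forall x y, inner (G x) y = inner x (G y). Proof. destruct hG as [_ h]; exact h. Qed.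
Lemma A_sa : forall x y, inner (A x) y = inner x (A y). Proof. destruct hA as [_ h]; exact h. Qed.

Lemma T_lin : linear_op H Top.
Proof. unfold Top. apply (lin_comp A G); [apply A_lin | apply G_lin]. Qed.
Lemma Sl_lin : forall lam, linear_op H (Sl lam).
Proof. intros. unfold Sl. apply (lin_subf Top (vscal lam)). apply T_lin. apply lin_vscal. Qed.
Lemma Sdl_lin : forall lam, linear_op H (Sdl lam).
Proof.
  intros. unfold Sdl. apply (lin_subf (fun y => G (A y)) (vscal _)).
  apply lin_comp; [apply G_lin | apply A_lin]. apply lin_vscal.
Qed.

Lemma T_bnd : forall x, hnorm (Top x) <= a * c * hnorm x.
Proof.
  intros. unfold Top. eapply Rle_trans; [apply hab|]. rewrite Rmult_assoc.
  apply Rmult_le_compat_l; [lra | apply hcb].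
Qed.
Lemma GA_bnd : forall x, hnorm (G (A x)) <= a * c * hnorm x.
Proof.
  intros. eapply Rle_trans; [apply hcb|]. replace (a * c * hnorm x) with (c * (a * hnorm x)) by ring.
  apply Rmult_le_compat_l; [lra | apply hab].
Qed.
Lemma Sl_bnd : forall lam x, hnorm (Sl lam x) <= (a * c + Cabs lam) * hnorm x.
Proof.
  intros. unfold Sl. eapply Rle_trans; [apply hn_sub_le|]. rewrite hn_scal.
  pose proof (T_bnd x). lra.
Qed.
Lemma Sdl_bnd : forall lam x, hnorm (Sdl lam x) <= (a * c + Cabs lam) * hnorm x.
Proof.
  intros. unfold Sdl. eapply Rle_trans; [apply hn_sub_le|]. rewrite hn_scal, Cabs_conj.
  pose proof (GA_bnd x). lra.
Qed.

Lemma Sl_adj : forall lam x y, inner (Sl lam x) y = inner x (Sdl lam y).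
Proof.
  intros. unfold Sl, Sdl, Top.
  assert (E : inner (A (G x)) y = inner x (G (A y))) by (rewrite A_sa, G_sa; reflexivity).
  apply Ceq.
  - rewrite inner_sub_l_re, inner_sub_r_re, E, inner_scal_l, inner_scal_r. simpl. ring.
  - rewrite inner_sub_l_im, inner_sub_r_im, E, inner_scal_l, inner_scal_r. simpl. ring.
Qed.

Definition pp := c * a * c.

Lemma P_sa : forall x y, inner (Pop x) y = inner x (Pop y).
Proof. intros. unfold Pop. rewrite G_sa, A_sa, G_sa. reflexivity. Qed.
Lemma P_lin : linear_op H Pop.
Proof. unfold Pop. apply lin_comp. apply G_lin. apply T_lin. Qed.
Lemma P_bnd : forall x, hnorm (Pop x) <= pp * hnorm x.
Proof.
  intros. unfold Pop, pp. eapply Rle_trans; [apply hcb|]. rewrite !Rmult_assoc.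
  apply Rmult_le_compat_l; [lra|]. rewrite <- Rmult_assoc. apply T_bnd.
Qed.
Lemma pp_pos : 0 < pp.
Proof. unfold pp. repeat apply Rmult_lt_0_compat; lra. Qed.

Lemma E3 : forall x, nsq (Pop x) <= pp * Re (inner (Pop x) x).
Proof.
  intros x. set (y := Pop x).
  pose proof pp_pos as hp.
  destruct (hpos (vadd x (vscal (RtoC (- / pp)) y))) as [_ P0].
  destruct P_lin as [l1 l2].
  change (G (A (G (vadd x (vscal (RtoC (- / pp)) y))))) with (Pop (vadd x (vscal (RtoC (- / pp)) y))) in P0.
  rewrite l1, l2 in P0. rewrite re_expand in P0.
  assert (R1 : Re (inner (Pop x) y) = nsq y) by reflexivity.
  assert (R2 : Re (inner (Pop y) x) = nsq y) by (rewrite P_sa, Re_inner_sym; reflexivity).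
  assert (R3 : Re (inner (Pop y) y) <= pp * nsq y).
  { eapply Rle_trans; [apply Rle_abs|]. eapply Rle_trans; [apply CS_re|].
    rewrite <- hn_sq. pose proof (P_bnd y). pose proof (hn_pos y).
    rewrite <- Rmult_assoc. apply Rmult_le_compat_r; auto. }
  rewrite R1, R2 in P0.
  assert (Q : - / pp * - / pp * Re (inner (Pop y) y) <= / pp * nsq y).
  { replace (- / pp * - / pp) with (/ pp * / pp) by ring.
    replace (/ pp * nsq y) with (/ pp * / pp * (pp * nsq y)) by fld.
    apply Rmult_le_compat_l; auto. assert (0 < / pp) by (apply Rinv_0_lt_compat; auto). nra. }
  assert (0 <= Re (inner (Pop x) x) - / pp * nsq y) by lra.
  apply Rmult_le_reg_l with (/ pp). apply Rinv_0_lt_compat; auto.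
  replace (/ pp * (pp * Re (inner y x))) with (Re (inner (Pop x) x)) by (unfold y; fld). lra.
Qed.

Lemma E1 : forall lam x, Cabs lam * hnorm x <= a * hnorm (G x) + hnorm (Sl lam x).
Proof.
  intros. rewrite <- hn_scal. eapply Rle_trans; [apply (hn_tri2 _ (Top x))|].
  rewrite hn_sub_sym. fold (Sl lam x). unfold Top. pose proof (hab (G x)). lra.
Qed.

Lemma GSl : forall lam x, G (Sl lam x) = vsub (Pop x) (vscal lam (G x)).
Proof.
  intros. unfold Sl. rewrite lin_sub by apply G_lin. destruct G_lin as [_ h]. rewrite h. reflexivity.
Qed.

Lemma E2 : forall lam x, Cabs lam * hnorm (G x) <= hnorm (Pop x) + c * hnorm (Sl lam x).
Proof.
  intros. rewrite <- hn_scal. eapply Rle_trans; [apply (hn_tri2 _ (Pop x))|].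
  rewrite hn_sub_sym, <- GSl. pose proof (hcb (Sl lam x)). lra.
Qed.

Lemma G_real : forall x, Im (inner (G x) x) = 0.
Proof. intros. pose proof (Im_inner_sym x (G x)). rewrite <- G_sa in H0. lra. Qed.

Lemma E4 : forall lam x,
  Rabs (Re (inner (Pop x) x) - Re lam * Re (inner (G x) x)) <= c * hnorm (Sl lam x) * hnorm x /\
  Rabs (Im lam * Re (inner (G x) x)) <= c * hnorm (Sl lam x) * hnorm x /\
  0 <= Re (inner (Pop x) x).
Proof.
  intros lam x.
  assert (E : Pop x = vadd (G (Sl lam x)) (vscal lam (G x))) by (rewrite GSl, vsub_add; reflexivity).
  destruct (hpos x) as [hi hr]. change (G (A (G x))) with (Pop x) in hi, hr.
  assert (B : c * hnorm (Sl lam x) * hnorm x >= hnorm (G (Sl lam x)) * hnorm x).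
  { apply Rle_ge. apply Rmult_le_compat_r. apply hn_pos. apply hcb. }
  pose proof (CS_re (G (Sl lam x)) x). pose proof (CS_im (G (Sl lam x)) x).
  pose proof (G_real x).
  rewrite E in hi, hr |- *. rewrite inner_add_l, inner_scal_l in hi, hr |- *. simpl in hi, hr |- *.
  rewrite H2 in hi, hr |- *.
  split; [|split].
  - replace (Re (inner (G (Sl lam x)) x) + (Re lam * Re (inner (G x) x) - Im lam * 0) -
     Re lam * Re (inner (G x) x)) with (Re (inner (G (Sl lam x)) x)) by ring. lra.
  - replace (Im lam * Re (inner (G x) x)) with (- Im (inner (G (Sl lam x)) x)) by lra.
    rewrite Rabs_Ropp. lra.
  - exact hr.
Qed.


Lemma L2_bound : forall lam x,
  Cabs lam * Cabs lam * hnorm x <= a * hnorm (Pop x) + (a * c + Cabs lam) * hnorm (Sl lam x).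
Proof.
  intros lam x. pose proof (E1 lam x) as e1. pose proof (E2 lam x) as e2.
  pose proof (Cabs_pos lam) as hL.
  assert (s1 : Cabs lam * (Cabs lam * hnorm x) <= Cabs lam * (a * hnorm (G x) + hnorm (Sl lam x)))
    by (apply Rmult_le_compat_l; auto).
  assert (s2 : a * (Cabs lam * hnorm (G x)) <= a * (hnorm (Pop x) + c * hnorm (Sl lam x)))
    by (apply Rmult_le_compat_l; lra).
  lra.
Qed.

Lemma real_pos : forall r, r <> 0 -> exists delta kappa, 0 < delta /\ 0 < kappa /\
  forall x, hnorm x = 1 -> hnorm (Sl (RtoC r) x) <= delta -> r * Re (inner (G x) x) >= kappa.
Proof.
  intros r hr. set (L := Rabs r).
  assert (hL : 0 < L) by (apply Rabs_pos_lt; auto).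
  pose proof pp_pos as hp.
  set (d1 := L * L / (2 * (a * c + L))).
  set (d2 := L * L * L * L / (8 * a * a * pp * c)).
  assert (hd1 : 0 < d1) by (unfold d1; apply Rdiv_lt_0_compat; [nra | nra]).
  assert (hd2 : 0 < d2) by (unfold d2; apply Rdiv_lt_0_compat; repeat apply Rmult_lt_0_compat; lra).
  exists (Rmin d1 d2), (L * L * L * L / (8 * a * a * pp)). split; [|split].
  - apply Rmin_glb_lt; auto.
  - apply Rdiv_lt_0_compat; repeat apply Rmult_lt_0_compat; lra.
  - intros x hx hd. set (d := hnorm (Sl (RtoC r) x)) in *.
    assert (hdd1 : d <= d1) by (eapply Rle_trans; [exact hd | apply Rmin_l]).
    assert (hdd2 : d <= d2) by (eapply Rle_trans; [exact hd | apply Rmin_r]).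
    assert (hd0 : 0 <= d) by apply hn_pos.
    pose proof (L2_bound (RtoC r) x) as e. rewrite Cabs_RtoC in e. fold L d in e. rewrite hx in e.
    assert (f1 : (a * c + L) * d <= L * L / 2).
    { apply Rle_trans with ((a * c + L) * d1). apply Rmult_le_compat_l; nra.
      unfold d1. right. field. nra. }
    assert (f2 : L * L / 2 <= a * hnorm (Pop x)) by lra.
    pose proof (hn_pos (Pop x)) as hP.
    assert (f3 : L * L / 2 * (L * L / 2) <= a * a * nsq (Pop x)).
    { rewrite <- hn_sq. replace (a * a * (hnorm (Pop x) * hnorm (Pop x))) with
        ((a * hnorm (Pop x)) * (a * hnorm (Pop x))) by ring.
      apply Rmult_le_compat; nra. }
    pose proof (E3 x) as e3.
    destruct (E4 (RtoC r) x) as [e4 [_ e5]]. fold d in e4. rewrite hx in e4. simpl in e4.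
    apply Rabs_le_between in e4 || (pose proof (Rle_abs (Re (inner (Pop x) x) - r * Re (inner (G x) x)))).
    set (g := Re (inner (G x) x)) in *. set (m := Re (inner (Pop x) x)) in *.
    assert (f4 : m <= r * g + c * d).
    { pose proof (Rle_abs (m - r * g)). lra. }
    assert (f5 : a * a * nsq (Pop x) <= a * a * pp * (r * g + c * d)).
    { replace (a * a * pp * (r * g + c * d)) with ((a * a) * (pp * (r * g + c * d))) by ring.
      apply Rmult_le_compat_l; [nra|]. eapply Rle_trans; [exact e3|].
      apply Rmult_le_compat_l; lra. }
    assert (f6 : a * a * pp * (c * d) <= L * L * L * L / 8).
    { apply Rle_trans with (a * a * pp * (c * d2)).
      apply Rmult_le_compat_l; [repeat apply Rmult_le_pos; lra|]. apply Rmult_le_compat_l; lra.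
      unfold d2. right. field. repeat split; apply Rgt_not_eq; lra. }
    assert (f7 : L * L * L * L / 8 <= a * a * pp * (r * g)) by nra.
    apply Rle_ge. apply Rmult_le_reg_l with (a * a * pp). repeat apply Rmult_lt_0_compat; lra.
    replace (a * a * pp * (L * L * L * L / (8 * a * a * pp))) with (L * L * L * L / 8) by
      (field; repeat split; apply Rgt_not_eq; lra).
    exact f7.
Qed.

Lemma Cabs_pos_im : forall lam, Im lam <> 0 -> 0 < Cabs lam.
Proof.
  intros lam h. pose proof (Cabs_sq lam). pose proof (Cabs_pos lam).
  assert (0 < Im lam * Im lam) by (apply Rsqr_pos_lt; auto).
  destruct (Req_dec (Cabs lam) 0) as [e|e]; [rewrite e in H0; nra | lra].
Qed.

Lemma nonreal_bb : forall lam, Im lam <> 0 ->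
  exists eps, 0 < eps /\ forall x, eps * hnorm x <= hnorm (Sl lam x).
Proof.
  intros lam hb. set (L := Cabs lam).
  assert (hL : 0 < L) by (apply Cabs_pos_im; auto).
  assert (hB : 0 < Rabs (Im lam)) by (apply Rabs_pos_lt; auto).
  pose proof pp_pos as hp.
  set (K1 := Rabs (Re lam) * c / Rabs (Im lam) + c).
  assert (hK1 : 0 < K1).
  { unfold K1. assert (0 <= Rabs (Re lam) * c / Rabs (Im lam)).
    { apply Rmult_le_pos. apply Rmult_le_pos; [apply Rabs_pos|lra]. left; apply Rinv_0_lt_compat; auto. }
    lra. }
  set (d1 := L * L / (2 * (a * c + L))).
  set (d2 := L * L * L * L / (4 * a * a * pp * K1)).
  assert (hd1 : 0 < d1) by (unfold d1; apply Rdiv_lt_0_compat; [nra | nra]).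
  assert (hd2 : 0 < d2) by (unfold d2; apply Rdiv_lt_0_compat; repeat apply Rmult_lt_0_compat; lra).
  exists (Rmin d1 d2). split; [apply Rmin_glb_lt; auto|].
  intros x. set (eps := Rmin d1 d2). set (d := hnorm (Sl lam x)).
  pose proof (hn_pos x) as hx0. pose proof (hn_pos (Sl lam x)) as hd0. fold d in hd0.
  destruct (Rle_lt_dec (eps * hnorm x) d) as [ok|bad]; [exact ok|]. exfalso.
  set (nx := hnorm x) in *.
  assert (heps : 0 < eps) by (apply Rmin_glb_lt; auto).
  assert (hnx : 0 < nx) by (destruct (Req_dec nx 0) as [e|e]; [rewrite e in bad; lra | lra]).
  assert (be1 : eps <= d1) by apply Rmin_l. assert (be2 : eps <= d2) by apply Rmin_r.
  pose proof (L2_bound lam x) as e. fold L d nx in e.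
  assert (f1 : (a * c + L) * d < L * L / 2 * nx).
  { apply Rlt_le_trans with ((a * c + L) * (d1 * nx)).
    apply Rmult_lt_compat_l; [nra|]. apply Rlt_le_trans with (eps * nx); auto.
    apply Rmult_le_compat_r; lra.
    unfold d1. right. field. nra. }
  assert (f2 : L * L / 2 * nx < a * hnorm (Pop x)) by lra.
  pose proof (hn_pos (Pop x)) as hP.
  assert (f3 : L * L / 2 * nx * (L * L / 2 * nx) < a * a * nsq (Pop x)).
  { rewrite <- hn_sq. replace (a * a * (hnorm (Pop x) * hnorm (Pop x))) with
        ((a * hnorm (Pop x)) * (a * hnorm (Pop x))) by ring.
    assert (0 <= L * L / 2 * nx) by (apply Rmult_le_pos; [nra|lra]).
    apply Rmult_le_0_lt_compat; auto. }
  pose proof (E3 x) as e3.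
  destruct (E4 lam x) as [e4 [e5 e6]]. fold d nx in e4, e5.
  set (g := Re (inner (G x) x)) in *. set (m := Re (inner (Pop x) x)) in *.
  assert (g1 : Rabs (Im lam) * Rabs g <= c * d * nx) by (rewrite <- Rabs_mult; exact e5).
  assert (g2 : Rabs (Re lam) * Rabs g <= Rabs (Re lam) * c / Rabs (Im lam) * d * nx).
  { apply Rmult_le_reg_l with (Rabs (Im lam)); auto.
    replace (Rabs (Im lam) * (Rabs (Re lam) * c / Rabs (Im lam) * d * nx)) with
      (Rabs (Re lam) * (c * d * nx)) by (field; lra).
    replace (Rabs (Im lam) * (Rabs (Re lam) * Rabs g)) with (Rabs (Re lam) * (Rabs (Im lam) * Rabs g)) by ring.
    apply Rmult_le_compat_l; [apply Rabs_pos | exact g1]. }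
  assert (g3 : m <= K1 * d * nx).
  { pose proof (Rle_abs (m - Re lam * g)).
    pose proof (Rle_abs (Re lam * g)). rewrite Rabs_mult in H1.
    unfold K1. replace ((Rabs (Re lam) * c / Rabs (Im lam) + c) * d * nx) with
      (Rabs (Re lam) * c / Rabs (Im lam) * d * nx + c * d * nx) by ring. lra. }
  assert (g4 : a * a * nsq (Pop x) <= a * a * pp * (K1 * d * nx)).
  { replace (a * a * pp * (K1 * d * nx)) with ((a * a) * (pp * (K1 * d * nx))) by ring.
    apply Rmult_le_compat_l; [nra|]. eapply Rle_trans; [exact e3|].
    apply Rmult_le_compat_l; lra. }
  assert (g5 : a * a * pp * (K1 * d * nx) <= L * L / 2 * nx * (L * L / 2 * nx)).
  { apply Rle_trans with (a * a * pp * (K1 * (d2 * nx) * nx)).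
    - apply Rmult_le_compat_l; [repeat apply Rmult_le_pos; lra|].
      apply Rmult_le_compat_r; [lra|]. apply Rmult_le_compat_l; [lra|].
      apply Rle_trans with (eps * nx); [lra|]. apply Rmult_le_compat_r; lra.
    - unfold d2. right. field. repeat split; apply Rgt_not_eq; lra. }
  lra.
Qed.


Lemma Sl_A : forall lam y, Sl (Cconj lam) (A y) = A (Sdl lam y).
Proof.
  intros. unfold Sl, Sdl, Top. rewrite lin_sub by apply A_lin.
  destruct A_lin as [_ h]. rewrite h. reflexivity.
Qed.

Lemma adj_bb : forall lam, 0 < Cabs lam ->
  (exists k, 0 < k /\ forall x, k * hnorm x <= hnorm (Sl (Cconj lam) x)) ->
  exists k', 0 < k' /\ forall y, k' * hnorm y <= hnorm (Sdl lam y).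
Proof.
  intros lam hL [k [hk hb]].
  exists (k * Cabs lam / (k + c * a)). split.
  - apply Rdiv_lt_0_compat; [nra|]. nra.
  - intros y. set (d := hnorm (Sdl lam y)).
    assert (e1 : Cabs lam * hnorm y <= d + c * hnorm (A y)).
    { rewrite <- (Cabs_conj lam), <- hn_scal.
      eapply Rle_trans; [apply (hn_tri2 _ (G (A y)))|]. rewrite hn_sub_sym.
      fold (Sdl lam y). fold d. pose proof (hcb (A y)). lra. }
    assert (e2 : k * hnorm (A y) <= a * d).
    { eapply Rle_trans; [apply hb|]. rewrite Sl_A. apply hab. }
    pose proof (hn_pos y). pose proof (hn_pos (A y)).
    assert (e3 : k * (Cabs lam * hnorm y) <= k * d + c * (k * hnorm (A y))).
    { replace (k * d + c * (k * hnorm (A y))) with (k * (d + c * hnorm (A y))) by ring.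
      apply Rmult_le_compat_l; lra. }
    assert (e4 : c * (k * hnorm (A y)) <= c * (a * d)) by (apply Rmult_le_compat_l; lra).
    apply Rmult_le_reg_l with (k + c * a); [nra|].
    replace ((k + c * a) * (k * Cabs lam / (k + c * a) * hnorm y)) with (k * (Cabs lam * hnorm y))
      by (field; apply Rgt_not_eq; nra).
    lra.
Qed.

Lemma not_spec : forall lam,
  (exists k, 0 < k /\ forall x, k * hnorm x <= hnorm (Sl lam x)) ->
  (exists k', 0 < k' /\ forall y, k' * hnorm y <= hnorm (Sdl lam y)) ->
  ~ spectrum H Top lam.
Proof.
  intros lam [k [hk hb]] [k' [hk' hb']] hs. apply hs.
  set (K := (a * c + Cabs lam) * (a * c + Cabs lam)).
  assert (hK : 0 < K) by (unfold K; pose proof (Cabs_pos lam); apply Rmult_lt_0_compat; nra).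
  refine (S_invertible (Sl lam) (Sdl lam) (Sl_lin lam) (Sdl_lin lam) K hK _ (Sl_adj lam) k k' hk hk' hb hb').
  intros u. eapply Rle_trans; [apply Sl_bnd|]. unfold K. rewrite Rmult_assoc.
  apply Rmult_le_compat_l; [pose proof (Cabs_pos lam); nra | apply Sdl_bnd].
Qed.

Lemma ap_bb : forall lam, ~ sigma_ap H Top lam ->
  exists k, 0 < k /\ forall x, k * hnorm x <= hnorm (Sl lam x).
Proof.
  intros lam hn. apply NNPP. intros hc0. apply hn.
  assert (hx : forall n : nat, exists x, hnorm (Sl lam x) < / (INR n + 1) * hnorm x).
  { intros n. apply NNPP. intros h. apply hc0. exists (/ (INR n + 1)). split.
    - apply Rinv_0_lt_compat. pose proof (pos_INR n). lra.
    - intros x. destruct (Rle_lt_dec (/ (INR n + 1) * hnorm x) (hnorm (Sl lam x))) as [o|o]; auto.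
      exfalso. apply h. exists x. exact o. }
  set (xs := fun n => proj1_sig (constructive_indefinite_description _ (hx n))).
  assert (hxs : forall n, hnorm (Sl lam (xs n)) < / (INR n + 1) * hnorm (xs n))
    by (intros; unfold xs; apply proj2_sig).
  assert (hpos' : forall n, 0 < hnorm (xs n)).
  { intros n. specialize (hxs n). pose proof (hn_pos (Sl lam (xs n))).
    pose proof (hn_pos (xs n)). destruct (Req_dec (hnorm (xs n)) 0) as [e|e]; [rewrite e in hxs; lra| lra]. }
  exists (fun n => vscal (RtoC (/ hnorm (xs n))) (xs n)). split.
  - intros n. rewrite hn_scal, Cabs_RtoC. rewrite Rabs_pos_eq by (left; apply Rinv_0_lt_compat; auto).
    field. apply Rgt_not_eq. auto. apply hpos'.
  - intros eps heps. destruct (archimed_cor1 eps heps) as [N [hN hN0]].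
    exists N. intros n hn'. unfold R_dist. rewrite Rminus_0_r.
    change (vsub (Top (vscal (RtoC (/ hnorm (xs n))) (xs n))) (vscal lam (vscal (RtoC (/ hnorm (xs n))) (xs n))))
      with (Sl lam (vscal (RtoC (/ hnorm (xs n))) (xs n))).
    destruct (Sl_lin lam) as [_ h2]. rewrite h2, hn_scal, Cabs_RtoC.
    rewrite (Rabs_pos_eq (/ hnorm (xs n))) by (left; apply Rinv_0_lt_compat; auto).
    rewrite Rabs_pos_eq by (apply Rmult_le_pos; [left; apply Rinv_0_lt_compat; auto| apply hn_pos]).
    specialize (hxs n). specialize (hpos' n).
    assert (A1 : / hnorm (xs n) * hnorm (Sl lam (xs n)) < / (INR n + 1)).
    { apply Rmult_lt_reg_l with (hnorm (xs n)); auto.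
      replace (hnorm (xs n) * (/ hnorm (xs n) * hnorm (Sl lam (xs n)))) with (hnorm (Sl lam (xs n)))
        by (field; apply Rgt_not_eq; auto). lra. }
    assert (A2 : / (INR n + 1) <= / INR N).
    { apply Rinv_le_contravar. apply lt_0_INR; lia. apply le_INR in hn'. lra. }
    lra.
Qed.


Lemma conj_real : forall r, Cconj (RtoC r) = RtoC r.
Proof. intros. apply Ceq; simpl; lra. Qed.

Lemma spec_ap : forall r, r <> 0 -> spectrum H Top (RtoC r) -> sigma_ap H Top (RtoC r).
Proof.
  intros r hr hs. apply NNPP. intros hn.
  apply (not_spec (RtoC r)); auto.
  - apply ap_bb; auto.
  - apply adj_bb. rewrite Cabs_RtoC. apply Rabs_pos_lt; auto.
    rewrite conj_real. apply ap_bb; auto.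
Qed.

Lemma main_ops :
  (bounded_op H Top /\ Gsymmetric H G Top) /\
  (forall lam : Cplx, spectrum H Top lam -> Im lam = 0) /\
  (forall r : R, 0 < r -> spectrum H Top (RtoC r) -> sigma_pp H G Top (RtoC r)) /\
  (forall r : R, r < 0 -> spectrum H Top (RtoC r) -> sigma_mm H G Top (RtoC r)).
Proof.
  split; [split|split; [|split]].
  - split. apply T_lin. exists (a * c). apply T_bnd.
  - intros x y. unfold Top. rewrite G_sa, A_sa. reflexivity.
  - intros lam hs. destruct (Req_dec (Im lam) 0) as [e|e]; auto. exfalso.
    apply (not_spec lam); auto.
    + apply nonreal_bb; auto.
    + apply adj_bb. apply Cabs_pos_im; auto. apply nonreal_bb. simpl. lra.
  - intros r hr hs. split. apply spec_ap; auto; apply Rgt_not_eq; lra.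
    intros x [hx hcv]. destruct (real_pos r (Rgt_not_eq _ _ hr)) as [dl [kp [hdl [hkp hk]]]].
    destruct (hcv dl hdl) as [N hN]. exists (kp / r). split. apply Rdiv_lt_0_compat; auto.
    exists N. intros n hn. specialize (hN n hn). unfold R_dist in hN. rewrite Rminus_0_r in hN.
    assert (hk' := hk (x n) (hx n) ltac:(left; eapply Rle_lt_trans; [apply Rle_abs | exact hN])).
    apply Rle_ge. apply Rmult_le_reg_l with r; auto.
    replace (r * (kp / r)) with kp by (field; lra). lra.
  - intros r hr hs. split. apply spec_ap; auto; apply Rlt_not_eq; lra.
    intros x [hx hcv]. destruct (real_pos r (Rlt_not_eq _ _ hr)) as [dl [kp [hdl [hkp hk]]]].
    destruct (hcv dl hdl) as [N hN]. exists (- (kp / r)). split.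
    { assert (kp / r < 0). { apply Ropp_lt_cancel. replace (- (kp / r)) with (kp / (- r)) by (field; lra).
        rewrite Ropp_0. apply Rdiv_lt_0_compat; lra. } lra. }
    exists N. intros n hn. specialize (hN n hn). unfold R_dist in hN. rewrite Rminus_0_r in hN.
    assert (hk' := hk (x n) (hx n) ltac:(left; eapply Rle_lt_trans; [apply Rle_abs | exact hN])).
    rewrite Ropp_involutive.
    apply Rmult_le_reg_l with (- r); [lra|].
    replace (- r * (kp / r)) with (- kp) by (field; lra). lra.
Qed.

End Ops.

End Vec.

Theorem propositionp (H : HilbertSpace) (G0 A0 : H -> H)
  (hG : selfadjoint H G0) (hA : selfadjoint H A0)
  (hpos : nonneg_op H (fun x => G0 (A0 (G0 x)))) :
  let T := fun x => A0 (G0 x) in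
  (bounded_op H T /\ Gsymmetric H G0 T) /\
  (forall lam : Cplx, spectrum H T lam -> Im lam = 0) /\
  (forall r : R, 0 < r -> spectrum H T (RtoC r) -> sigma_pp H G0 T (RtoC r)) /\
  (forall r : R, r < 0 -> spectrum H T (RtoC r) -> sigma_mm H G0 T (RtoC r)).
Proof.
  intros T.
  destruct (bnd_pos H G0 (proj1 hG)) as [c [hc hcb]].
  destruct (bnd_pos H A0 (proj1 hA)) as [a [ha hab]].
  exact (main_ops H G0 A0 hG hA hpos c a hc ha hcb hab).
Qed.
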